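(* Let $G$ be a compact matrix quantum group with polynomial growth with respect to a length function $\ell$. Then the fusion algebra $F(G)$ has the rapid decay property with respect to $\ell$: there exist $C>0$ and $s>0$ such that $\|\pi(f)\|\le C\Bigl(\sum_{\alpha\in\operatorname{Irred}(G)}|f(\alpha)|^2d(\alpha)^2(1+\ell(\alpha))^{2s}\Bigr)^{1/2}$ for every $f=\sum_\alpha f(\alpha)\alpha\in F(G)$.
   Context: $\operatorname{Irred}(G)$ is a complete set of representatives of irreducible unitary corepresentations of $G$, $d(\alpha)$ the dimension of $\alpha$, $e$ the trivial corepresentation. The fusion algebra $F(G)$ is the vector space with basis $\operatorname{Irred}(G)$ and product $\alpha\beta=\sum_\gamma N^\gamma_{\alpha,\beta}\gamma$ ($N^\gamma_{\alpha,\beta}$ = multiplicity of $\gamma$ in $\alpha\otimes\beta$). $\ell^2(\operatorname{Irred}(G))$ is its completion for the inner product making $\operatorname{Irred}(G)$ orthogonal with $\langle\alpha,\alpha\rangle=d(\alpha)^2$, and $\pi(f)$ is the bounded operator on it extending left multiplication by $f$; $\|\pi(f)\|$ is its operator norm. A length function $\ell:\operatorname{Irred}(G)\to[0,\infty)$ satisfies $\ell(e)=0$, $\ell(\bar\alpha)=\ell(\alpha)$, $\ell(\gamma)\le\ell(\alpha)+\ell(\beta)$ when $N^\gamma_{\alpha,\beta}\neq0$. Polynomial growth w.r.t. $\ell$: there exist $c,s>0$ with $\sum_{\ell(\alpha)\in(n-1,n]}d(\alpha)^2\le c\,n^s$ for all $n\in\mathbb{N}$. *)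

(* Defs.v *)
From HB Require Import structures.
From mathcomp Require Import all_boot all_order all_algebra.
From mathcomp Require Import all_classical all_reals all_analysis.
From mathcomp Require Import complex.
Set Implicit Arguments. Unset Strict Implicit. Unset Printing Implicit Defensive.
Import Order.TTheory GRing.Theory Num.Theory.
Local Open Scope ring_scope.

(* Abstract fusion-rule data of a compact (matrix) quantum group G:
   - [I]        : index type standing for Irred(G) (countable);
   - [e]        : the trivial corepresentation;
   - [bar]      : the conjugate corepresentation alpha |-> alpha-bar;
   - [N g a b]  : N^g_{a,b}, the multiplicity of g in a (x) b;
   - [supp a b] : a finite duplicate-free list containing every g with
                  N^g_{a,b} <> 0 (tensor products decompose into finitely
                  many irreducibles);
   - [d a]      : the (integer, positive) dimension of a.
   The axioms below are the standard properties of the fusion rules of a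
   compact quantum group (Woronowicz): unit, conjugation, Frobenius
   reciprocity, associativity of the tensor product, multiplicativity and
   conjugation-invariance of the dimension. *)
Record fusion_rules (I : countType) := FusionRules {
  fr_e : I;
  fr_bar : I -> I;
  fr_N : I -> I -> I -> nat;
  fr_supp : I -> I -> seq I;
  fr_d : I -> nat;
  fr_barK : involutive fr_bar;
  fr_bar_e : fr_bar fr_e = fr_e;
  fr_supp_uniq : forall a b, uniq (fr_supp a b);
  fr_suppP : forall g a b, fr_N g a b != 0%N -> g \in fr_supp a b;
  fr_unitl : forall g b, fr_N g fr_e b = (g == b) :> nat;
  fr_unitr : forall g a, fr_N g a fr_e = (g == a) :> nat;
  fr_frobl : forall g a b, fr_N g a b = fr_N b (fr_bar a) g;
  fr_frobr : forall g a b, fr_N g a b = fr_N a g (fr_bar b);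
  fr_assoc : forall a b c x,
    (\sum_(y <- fr_supp a b) fr_N y a b * fr_N x y c =
     \sum_(y <- fr_supp b c) fr_N y b c * fr_N x a y)%N;
  fr_d_gt0 : forall a, (0 < fr_d a)%N;
  fr_d_bar : forall a, fr_d (fr_bar a) = fr_d a;
  fr_dM : forall a b,
    (fr_d a * fr_d b = \sum_(g <- fr_supp a b) fr_N g a b * fr_d g)%N
}.

Section FusionDefs.
Variables (I : countType) (F : fusion_rules I) (R : realType).

Definition is_length_function (l : I -> R) : Prop :=
  [/\ forall a, 0 <= l a,
      l (fr_e F) = 0,
      forall a, l (fr_bar F a) = l a &
      forall a b g, fr_N F g a b != 0%N -> l g <= l a + l b].

(* alpha lies in the n-th shell  l(alpha) \in (n-1, n]  (n >= 1); the first
   shell also contains the elements of length 0. *)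
Definition in_shell (l : I -> R) (n : nat) (a : I) : bool :=
  ((n == 1%N) || ((n.-1)%:R < l a)) && (l a <= n%:R).

(* polynomial growth:  sum_{l(a) in (n-1,n]} d(a)^2 <= c n^s  for all n >= 1;
   the (possibly infinite) sum is bounded by bounding all its finite
   partial sums. *)
Definition polynomial_growth (l : I -> R) : Prop :=
  exists c s : R, 0 < c /\ 0 < s /\
    forall (n : nat) (A : seq I), (1 <= n)%N -> uniq A ->
      all (in_shell l n) A ->
      \sum_(a <- A) ((fr_d F a)%:R ^+ 2 : R) <= c * powR (n%:R) s.

Definition cnorm2 (z : R[i]) : R := complex.Re z ^+ 2 + complex.Im z ^+ 2.

(* For f = sum_{a in sf} f(a) a and g = sum_{b in sg} g(b) b in F(G),
   the coefficient of gamma in the fusion product f g. *)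
Definition fusion_mul_coef (sf sg : seq I) (f g : I -> R[i]) (c : I) : R[i] :=
  \sum_(a <- sf) \sum_(b <- sg) (f a * g b) *+ fr_N F c a b.

(* squared l^2(Irred(G)) norm of a finitely supported element:
   <alpha, alpha> = d(alpha)^2, Irred(G) orthogonal. *)
Definition l2norm2 (s : seq I) (f : I -> R[i]) : R :=
  \sum_(a <- s) cnorm2 (f a) * (fr_d F a)%:R ^+ 2.

Definition rd_norm2 (l : I -> R) (s : R) (sf : seq I) (f : I -> R[i]) : R :=
  \sum_(a <- sf) cnorm2 (f a) * (fr_d F a)%:R ^+ 2 * powR (1 + l a) (2 * s).

End FusionDefs.

(* Main.v *)
Require Import Defs.
From HB Require Import structures.
From mathcomp Require Import all_boot all_order all_algebra.
From mathcomp Require Import all_classical all_reals all_analysis.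
From mathcomp Require Import complex.
From mathcomp Require Import ring lra.
Import Order.TTheory GRing.Theory Num.Theory.
Local Open Scope ring_scope.

Section Gen.
Variable R : realType.

Lemma cs_real (T : Type) (s : seq T) (c w t : T -> R) :
  (forall i, 0 <= c i) -> (forall i, 0 < w i) ->
  (\sum_(i <- s) c i * t i) ^+ 2 <=
  (\sum_(i <- s) c i * w i * t i ^+ 2) * (\sum_(i <- s) c i / w i).
Proof.
move=> c0 w0.
rewrite expr2 !mulr_suml.
under eq_bigr do rewrite mulr_sumr.
under [X in _ <= X]eq_bigr do rewrite mulr_sumr.
set A := (X in _ <= X).
suff H : 2 * (\sum_(i <- s) \sum_(j <- s) c i * t i * (c j * t j)) <= A + A.
  lra.
have eA : A = \sum_(i <- s) \sum_(j <- s) c j * w j * t j ^+ 2 * (c i / w i).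
  by rewrite /A exchange_big.
rewrite {2}eA /A -big_split /= mulr_sumr.
apply: ler_sum => i _; rewrite -big_split /= mulr_sumr.
apply: ler_sum => j _.
have wi := w0 i; have wj := w0 j.
have E : c i * w i * t i ^+ 2 * (c j / w j) + c j * w j * t j ^+ 2 * (c i / w i)
   - 2 * (c i * t i * (c j * t j)) =
   c i * c j * (w i * t i - w j * t j) ^+ 2 / (w i * w j).
  field; apply/andP; split; rewrite gt_eqF //.
rewrite -subr_ge0 E.
apply: divr_ge0; last by apply: mulr_ge0; apply: ltW.
by apply: mulr_ge0; [apply: mulr_ge0|apply: sqr_ge0].
Qed.

Lemma ReD (x y : R[i]) : complex.Re (x + y) = complex.Re x + complex.Re y.
Proof. by case: x => ? ?; case: y. Qed.
Lemma ImD (x y : R[i]) : complex.Im (x + y) = complex.Im x + complex.Im y.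
Proof. by case: x => ? ?; case: y. Qed.

Lemma ReMn (x : R[i]) n : complex.Re (x *+ n) = n%:R * complex.Re x.
Proof.
elim: n => [|n IH]; first by rewrite mulr0n mul0r.
by rewrite mulrS ReD IH mulrS mulrDl mul1r.
Qed.
Lemma ImMn (x : R[i]) n : complex.Im (x *+ n) = n%:R * complex.Im x.
Proof.
elim: n => [|n IH]; first by rewrite mulr0n mul0r.
by rewrite mulrS ImD IH mulrS mulrDl mul1r.
Qed.

Lemma Re_sum (T : Type) (s : seq T) (z : T -> R[i]) (c : T -> nat) :
  complex.Re (\sum_(i <- s) z i *+ c i) = \sum_(i <- s) (c i)%:R * complex.Re (z i).
Proof.
elim: s => [|a s IH]; first by rewrite !big_nil.
by rewrite !big_cons ReD IH ReMn.
Qed.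
Lemma Im_sum (T : Type) (s : seq T) (z : T -> R[i]) (c : T -> nat) :
  complex.Im (\sum_(i <- s) z i *+ c i) = \sum_(i <- s) (c i)%:R * complex.Im (z i).
Proof.
elim: s => [|a s IH]; first by rewrite !big_nil.
by rewrite !big_cons ImD IH ImMn.
Qed.

Lemma cnorm2_ge0 (z : R[i]) : 0 <= cnorm2 z.
Proof. by rewrite /cnorm2 addr_ge0 // sqr_ge0. Qed.

Lemma cnorm2M (x y : R[i]) : cnorm2 (x * y) = cnorm2 x * cnorm2 y.
Proof. case: x => a b; case: y => c d; rewrite /cnorm2 /=; ring. Qed.

Lemma cs_cplx (T : Type) (s : seq T) (c : T -> nat) (w : T -> R) (z : T -> R[i]) :
  (forall i, 0 < w i) ->
  cnorm2 (\sum_(i <- s) z i *+ c i) <=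
  (\sum_(i <- s) (c i)%:R * w i * cnorm2 (z i)) * (\sum_(i <- s) (c i)%:R / w i).
Proof.
move=> w0; rewrite /cnorm2 Re_sum Im_sum.
have c0 : forall i, 0 <= (c i)%:R :> R by move=> i; apply: ler0n.
have H1 := @cs_real T s _ _ (fun i => complex.Re (z i)) c0 w0.
have H2 := @cs_real T s _ _ (fun i => complex.Im (z i)) c0 w0.
apply: le_trans (lerD H1 H2) _.
rewrite -mulrDl -big_split /=.
by rewrite le_eqVlt; apply/orP; left; apply/eqP; congr (_ * _); apply: eq_bigr => i _; rewrite mulrDr.
Qed.

End Gen.

Lemma sub_sum_nat (T : eqType) (s t : seq T) (G : T -> nat) :
  uniq s -> uniq t -> {subset s <= t} ->
  (\sum_(i <- s) G i <= \sum_(i <- t) G i)%N.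
Proof.
move=> us ut st.
have E : (\sum_(i <- t | i \in s) G i = \sum_(i <- s) G i)%N.
  rewrite -big_filter; apply: perm_big.
  apply: uniq_perm => //; first by rewrite filter_uniq.
  move=> x; rewrite mem_filter /=.
  by case xs: (x \in s) => //=; rewrite st.
rewrite [X in (_ <= X)%N](bigID (mem s)) /= E.
exact: leq_addr.
Qed.

Lemma supp_sum_nat (T : eqType) (s t : seq T) (G : T -> nat) :
  uniq s -> uniq t -> (forall g, G g != 0%N -> g \in t) ->
  (\sum_(i <- s) G i <= \sum_(i <- t) G i)%N.
Proof.
move=> us ut Gt.
rewrite (bigID (fun i => G i != 0%N)) /=.
rewrite [X in (_ + X)%N]big1; last by move=> i /negPn/eqP.
rewrite addn0 -big_filter.
apply: sub_sum_nat => //; first by rewrite filter_uniq.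
by move=> x; rewrite mem_filter => /andP[/Gt].
Qed.

Section Fus.
Variables (I : countType) (F : fusion_rules I).

Lemma d_le (a b x : I) : fr_N F x a b != 0%N -> (fr_d F x <= fr_d F a * fr_d F b)%N.
Proof.
move=> Nx; rewrite fr_dM (bigD1_seq x) //=; last exact: fr_supp_uniq.
  apply: leq_trans (leq_addr _ _).
  by rewrite leq_pmull // lt0n.
exact: fr_suppP.
Qed.

Lemma sum_x (a b : I) (sc : seq I) : uniq sc ->
  (\sum_(x <- sc) fr_N F x a b * fr_d F x <= fr_d F a * fr_d F b)%N.
Proof.
move=> u; rewrite fr_dM; apply: supp_sum_nat => //; first exact: fr_supp_uniq.
move=> g; rewrite muln_eq0 negb_or => /andP[H _]; exact: fr_suppP.
Qed.

Lemma sum_b (a x : I) (sg : seq I) : uniq sg ->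
  (\sum_(b <- sg) fr_N F x a b * fr_d F b <= fr_d F a * fr_d F x)%N.
Proof.
move=> u.
under eq_bigr do rewrite fr_frobl.
rewrite -(fr_d_bar F a) fr_dM; apply: supp_sum_nat => //; first exact: fr_supp_uniq.
move=> g; rewrite muln_eq0 negb_or => /andP[H _]; exact: fr_suppP.
Qed.

End Fus.

Section Shell.
Variable R : realType.

Lemma inv_sq_sum (N : nat) :
  \sum_(m < N) ((m.+1)%:R ^+ 2 : R)^-1 <= 2 - 2 / (N.+1)%:R.
Proof.
elim: N => [|N IH]; first by rewrite big_ord0 divr1 subrr.
rewrite big_ord_recr /=.
apply: le_trans (lerD IH (lexx _)) _.
have hN : (0 : R) < N.+1%:R by rewrite ltr0n.
have E : (N.+2%:R : R) = N.+1%:R + 1 by rewrite -natr1.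
rewrite E.
set x := (N.+1%:R : R) in hN *.
rewrite -subr_ge0.
have -> : 2 - 2 / (x + 1) - (2 - 2 / x + (x ^+ 2)^-1) = (x - 1) / (x ^+ 2 * (x + 1)).
  field; apply/andP; split; rewrite ?lt0r_neq0 //; lra.
apply: divr_ge0.
  rewrite subr_ge0 /x; by rewrite ler1n.
by apply: mulr_ge0; [apply: sqr_ge0| lra].
Qed.

Lemma mof_ex (x : R) : exists m : nat, x <= m.+1%:R.
Proof. by eexists; apply: ltW (truncnS_gt x). Qed.

Definition mof (x : R) : nat := ex_minn (mof_ex x).

Lemma mofP (x : R) : x <= (mof x).+1%:R /\ ((mof x == 0)%N || ((mof x)%:R < x)).
Proof.
rewrite /mof; case: ex_minnP => m Hm Hmin; split => //.
case: m Hm Hmin => [|m] // Hm Hmin /=.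
rewrite ltNge; apply/negP => H; have := Hmin m H; by rewrite ltnn.
Qed.

Lemma mof_le (x : R) : 0 <= x -> (mof x).+1%:R <= 1 + x.
Proof.
move=> x0; have [_] := mofP x.
case/orP => [/eqP ->|H]; first by lra.
rewrite -nat1r; lra.
Qed.

End Shell.
Arguments mof {R}.
Arguments mofP {R}.
Arguments mof_le {R}.

Lemma shell_sum (R : realType) (I : countType) (F : fusion_rules I) (l : I -> R) (c s0 : R) :
  (forall a, 0 <= l a) -> 0 <= s0 -> 0 <= c ->
  (forall (n : nat) (A : seq I), (1 <= n)%N -> uniq A -> all (in_shell l n) A ->
      \sum_(a <- A) ((fr_d F a)%:R ^+ 2 : R) <= c * powR (n%:R) s0) ->
  forall sf : seq I, uniq sf ->
  \sum_(a <- sf) (fr_d F a)%:R ^+ 2 / (1 + l a) `^ (s0 + 2) <= 2 * c.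
Proof.
move=> l0 s00 c0 PG sf usf.
pose m a := mof (l a).
pose G (k : nat) : R := ((k.+1%:R) `^ s0 * (k.+1%:R) ^+ 2)^-1.
have Gpos k : 0 < (k.+1%:R : R) `^ s0 * (k.+1%:R) ^+ 2.
  by apply: mulr_gt0; [apply: powR_gt0; rewrite ltr0n | apply: exprn_gt0; rewrite ltr0n].
apply: (@le_trans _ _ (\sum_(a <- sf) G (m a) * (fr_d F a)%:R ^+ 2)).
  apply: ler_sum => a _.
  rewrite [G _ * _]mulrC; apply: ler_wpM2l; first exact: sqr_ge0.
  have Ppos : 0 < (1 + l a) `^ (s0 + 2).
    by apply: powR_gt0; have := l0 a; lra.
  rewrite /G lef_pV2 ?posrE //.
  have -> : ((m a).+1%:R : R) `^ s0 * (m a).+1%:R ^+ 2 = (m a).+1%:R `^ (s0 + 2).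
    rewrite powRD; last by rewrite pnatr_eq0 implybT.
    by rewrite -[2 in X in _ = _ * X]/(2%:R) powR_mulrn // ler0n.
  apply: ge0_ler_powR; rewrite ?nnegrE //; first lra.
    by have := l0 a; lra.
  exact: mof_le.
pose M := (\max_(a <- sf) m a)%N.
have -> : \sum_(a <- sf) G (m a) * (fr_d F a)%:R ^+ 2 =
  \sum_(k < M.+1) \sum_(a <- sf | m a == k) G (m a) * (fr_d F a)%:R ^+ 2.
  under [RHS]eq_bigr do rewrite big_mkcond /=.
  rewrite exchange_big /=; apply: eq_big_seq => a ain.
  have lt : (m a < M.+1)%N.
    rewrite ltnS /M; exact: (leq_bigmax_seq (F := fun a => m a)).
  rewrite (bigD1 (Ordinal lt)) //= eqxx big1 ?addr0 // => k.
  by rewrite -val_eqE /= eq_sym => /negbTE ->.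
apply: (@le_trans _ _ (\sum_(k < M.+1) c * ((k.+1)%:R ^+ 2)^-1)).
  apply: ler_sum => k _.
  have -> : \sum_(a <- sf | m a == k) G (m a) * (fr_d F a)%:R ^+ 2 =
           G k * \sum_(a <- [seq a <- sf | m a == k]) (fr_d F a)%:R ^+ 2.
    rewrite big_filter mulr_sumr; apply: eq_bigr => a /eqP -> //.
  apply: (@le_trans _ _ (G k * (c * (k.+1%:R) `^ s0))).
    apply: ler_wpM2l; first by rewrite /G invr_ge0 ltW.
    apply: PG => //; first by rewrite filter_uniq.
    apply/allP => a; rewrite mem_filter => /andP[/eqP <- _].
    have [H1 H2] := mofP (l a).
    by rewrite /in_shell /= H1 andbT -/(m a).
  have hp : 0 < (k.+1%:R : R) `^ s0 by apply: powR_gt0; rewrite ltr0n.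
  rewrite /G le_eqVlt; apply/orP; left; apply/eqP.
  field; by rewrite nat1r pnatr_eq0 lt0r_neq0.
have -> : \sum_(k < M.+1) c * ((k.+1)%:R ^+ 2)^-1 = c * \sum_(k < M.+1) ((k.+1)%:R ^+ 2 : R)^-1.
  by rewrite mulr_sumr.
rewrite mulrC ler_wpM2r //.
apply: le_trans (inv_sq_sum R M.+1) _.
rewrite gerBl; apply: divr_ge0 => //; exact: ler0n.
Qed.

Theorem proposition3p6 (I : countType) (F : fusion_rules I) (R : realType)
    (l : I -> R) :
  is_length_function F l -> polynomial_growth F l ->
  exists C s : R, 0 < C /\ 0 < s /\
    forall (sf sg sc : seq I) (f g : I -> R[i]),
      uniq sf -> uniq sg -> uniq sc ->
      Num.sqrt (l2norm2 F sc (fusion_mul_coef F sf sg f g))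
        <= C * Num.sqrt (rd_norm2 F l s sf f) * Num.sqrt (l2norm2 F sg g).
Proof.
move=> [l0 _ _ _] [c [s0 [c0 [s00 PG]]]].
exists (Num.sqrt (2 * c)), (s0 / 2 + 1).
split.
  rewrite sqrtr_gt0; lra.
split.
  have : 0 < s0 / 2 by apply: divr_gt0.
  lra.
move=> sf sg sc f g usf usg usc.
have S2 : 2 * (s0 / 2 + 1) = s0 + 2 by field.
set s := s0 / 2 + 1.
pose D (a : I) : R := (fr_d F a)%:R.
have Dpos a : 0 < D a by rewrite /D ltr0n fr_d_gt0.
pose P (a : I) : R := (1 + l a) `^ (2 * s).
have Ppos a : 0 < P a by apply: powR_gt0; have := l0 a; lra.
have RD0 : 0 <= rd_norm2 F l s sf f.
  by apply: sumr_ge0 => a _; apply: mulr_ge0; [apply: mulr_ge0; [apply: cnorm2_ge0|apply: sqr_ge0]|apply: powR_ge0].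
have L20 : 0 <= l2norm2 F sg g.
  by apply: sumr_ge0 => a _; apply: mulr_ge0; [apply: cnorm2_ge0|apply: sqr_ge0].
rewrite -sqrtrM; last lra.
rewrite -sqrtrM; last by apply: mulr_ge0 => //; lra.
apply: ler_wsqrtr.
have Sb : \sum_(a <- sf) D a ^+ 2 / P a <= 2 * c.
  rewrite /P S2; apply: shell_sum => //; lra.
pose ps := [seq (a, b) | a <- sf, b <- sg].
pose w (p : I * I) : R := D p.1 * P p.1 * D p.2.
have wpos p : 0 < w p by rewrite /w !mulr_gt0.
pose z (p : I * I) : R[i] := f p.1 * g p.2.
pose A x := \sum_(p <- ps) (fr_N F x p.1 p.2)%:R * w p * cnorm2 (z p).
pose B x := \sum_(p <- ps) (fr_N F x p.1 p.2)%:R / w p.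
have A0 x : 0 <= A x.
  by apply: sumr_ge0 => p _; apply: mulr_ge0; [apply: mulr_ge0; [apply: ler0n|apply: ltW]|apply: cnorm2_ge0].
have key1 x : cnorm2 (fusion_mul_coef F sf sg f g x) <= A x * B x.
  have -> : fusion_mul_coef F sf sg f g x = \sum_(p <- ps) z p *+ fr_N F x p.1 p.2.
    by rewrite /fusion_mul_coef big_allpairs.
  exact: cs_cplx.
have key2 x : B x <= 2 * c / D x.
  have Dx := Dpos x.
  apply: (@le_trans _ _ (\sum_(a <- sf) D a ^+ 2 / P a / D x)); last first.
    rewrite -mulr_suml; apply: ler_wpM2r => //.
    by rewrite invr_ge0 ltW.
  rewrite /B big_allpairs; apply: ler_sum => a _ /=.
  have Da := Dpos a; have Pa := Ppos a.
  have hb : \sum_(b <- sg) (fr_N F x a b)%:R / D b <= D a ^+ 3 / D x.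
    apply: (@le_trans _ _ (\sum_(b <- sg) (fr_N F x a b)%:R * D b * (D a ^+ 2 / D x ^+ 2))).
      apply: ler_sum => b _.
      have Db := Dpos b.
      have [N0|N0] := eqVneq (fr_N F x a b) 0%N.
        by rewrite N0 !mul0r.
      have hR : D x <= D a * D b by rewrite /D -natrM ler_nat d_le.
      have hR2 : D x ^+ 2 <= (D a * D b) ^+ 2.
        rewrite !expr2; apply: ler_pM => //; exact: ltW.
      rewrite -subr_ge0.
      have -> : (fr_N F x a b)%:R * D b * (D a ^+ 2 / D x ^+ 2) - (fr_N F x a b)%:R / D b
              = (fr_N F x a b)%:R * ((D a * D b) ^+ 2 - D x ^+ 2) / (D b * D x ^+ 2).
        by field; rewrite !lt0r_neq0 // exprn_gt0.
      apply: divr_ge0; last by apply: mulr_ge0; [exact: ltW|exact: sqr_ge0].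
      by apply: mulr_ge0; [apply: ler0n|rewrite subr_ge0].
    rewrite -mulr_suml.
    have hs : \sum_(b <- sg) (fr_N F x a b)%:R * D b <= D a * D x.
      rewrite /D; under eq_bigr do rewrite -natrM.
      by rewrite -natr_sum -natrM ler_nat sum_b.
    apply: (@le_trans _ _ (D a * D x * (D a ^+ 2 / D x ^+ 2))).
      by apply: ler_wpM2r => //; apply: divr_ge0; apply: sqr_ge0.
    rewrite le_eqVlt; apply/orP; left; apply/eqP; field.
    by rewrite lt0r_neq0.
  have -> : \sum_(b <- sg) (fr_N F x a b)%:R / w (a, b) =
            (D a * P a)^-1 * \sum_(b <- sg) (fr_N F x a b)%:R / D b.
    rewrite mulr_sumr; apply: eq_bigr => b _; rewrite /w /=.
    have Db := Dpos b.
    by field; rewrite !lt0r_neq0.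
  apply: (@le_trans _ _ ((D a * P a)^-1 * (D a ^+ 3 / D x))).
    by apply: ler_wpM2l => //; rewrite invr_ge0 ltW // mulr_gt0.
  rewrite le_eqVlt; apply/orP; left; apply/eqP; field.
  by rewrite !lt0r_neq0.
apply: (@le_trans _ _ (\sum_(x <- sc) 2 * c * (A x * D x))).
  rewrite /l2norm2; apply: ler_sum => x _.
  apply: (@le_trans _ _ (A x * (2 * c / D x) * D x ^+ 2)).
    apply: ler_wpM2r; first exact: sqr_ge0.
    apply: le_trans (key1 x) _.
    by apply: ler_wpM2l.
  have := Dpos x; move=> hx.
  rewrite le_eqVlt; apply/orP; left; apply/eqP; rewrite /D; field.
  by rewrite pnatr_eq0 -lt0n fr_d_gt0.
rewrite -mulr_sumr -[X in _ <= X]mulrA; apply: ler_wpM2l; first lra.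
have E1 : \sum_(x <- sc) A x * D x = \sum_(p <- ps) (w p * cnorm2 (z p)) *
    \sum_(x <- sc) (fr_N F x p.1 p.2 * fr_d F x)%:R.
  rewrite /A; under eq_bigr do rewrite mulr_suml.
  rewrite exchange_big; apply: eq_bigr => p _; rewrite mulr_sumr.
  by apply: eq_bigr => x _; rewrite natrM /D; ring.
rewrite E1.
apply: (@le_trans _ _ (\sum_(p <- ps) (w p * cnorm2 (z p)) * (D p.1 * D p.2))).
  apply: ler_sum => p _; apply: ler_wpM2l.
    by apply: mulr_ge0; [exact: ltW|exact: cnorm2_ge0].
  by rewrite -natr_sum /D -natrM ler_nat sum_x.
rewrite le_eqVlt; apply/orP; left; apply/eqP.
rewrite /rd_norm2 /l2norm2 mulr_suml big_allpairs; apply: eq_bigr => a _.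
rewrite mulr_sumr; apply: eq_bigr => b _.
by rewrite /w /z /= cnorm2M /P /D; ring.
Qed.
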